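(* Let $\omega_1,\dots,\omega_m$ be holomorphic $2$-forms on $\mathbb{H}^2$, continuous at the cusps $\mathbb{P}^1(K)$, and let $g:[0,2]^2\to\mathbb{H}^2\cup\mathbb{P}^1(K)$ be a membrane. Let $A\subset[0,1]^2$ be a diangle (a $2$-dimensional region homeomorphic to a disc, bounded by two arcs) with vertices $(0,0)$ and $(1,1)$, and let $B\subset[1,2]^2$ be a diangle with vertices $(1,1)$ and $(2,2)$; put $U=g(A)$, $V=g(B)$. Then (i) $\displaystyle\int_{g,U\cup V}\omega_1\cdots\omega_m=\sum_{j=0}^m\int_{g,U}\omega_1\cdots\omega_j\int_{g,V}\omega_{j+1}\cdots\omega_m$ (empty integrals being $1$); (ii) $J^a(g;A\cup B;\Omega)=J^a(g;A;\Omega)\,J^a(g;B;\Omega)$.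
   Context: $K$ is a real quadratic field, $\mathbb{H}^2=\mathbb{H}\times\mathbb{H}$ with cusps $\mathbb{P}^1(K)$. A membrane on a square $[0,L]^2$ is a continuous piecewise differentiable map into $\mathbb{H}^2\cup\mathbb{P}^1(K)$ sending each coordinate line $\{t_1=a\}$, $\{t_2=a\}$ into a finite union of holomorphic curves. For a region $A$ in the square, the (type a, ordered) iterated integral over $U=g(A)$ is \[\int_{g,U}\omega_1\cdots\omega_m=\int_{D_A}\bigwedge_{j=1}^m g^*\omega_j(t_{1,j},t_{2,j}),\] where $D_A=\{(t_{1,1},\dots,t_{1,m},t_{2,1},\dots,t_{2,m}): t_{1,1}\le\dots\le t_{1,m},\ t_{2,1}\le\dots\le t_{2,m},\ (t_{1,j},t_{2,j})\in A\text{ for }j=1,\dots,m\}$ and $g^*\omega_j(x,y)$ is the pulled-back $2$-form in coordinates $(x,y)$. With $\Omega=(\omega_1,\dots,\omega_m)$ and non-commuting formal variables $X_1,\dots,X_m$, the type a generating series is \[J^a(g;A;\Omega)=1+\sum_{k\ge1}\sum_{c:\{1,\dots,k\}\to\{1,\dots,m\}}X_{c(1)}\cdots X_{c(k)}\int_{g,g(A)}\omega_{c(1)}\cdots\omega_{c(k)},\] an element of the ring of non-commutative formal power series $\mathbb{C}\langle\langle X_1,\dots,X_m\rangle\rangle$. *)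

(* Defs.v *)
From HB Require Import structures.
From mathcomp Require Import all_boot all_order all_algebra.
From mathcomp Require Import all_classical all_reals all_analysis.
From mathcomp Require Import complex.
Set Implicit Arguments. Unset Strict Implicit. Unset Printing Implicit Defensive.
Import Order.TTheory GRing.Theory Num.Theory.
Import numFieldNormedType.Exports.
Local Open Scope classical_set_scope.
Local Open Scope ring_scope.

Section Defs.
Variable R : realType.
Local Notation C := R[i].

Definition leb2 := (@lebesgue_measure R \x @lebesgue_measure R)%E.

Definition cint (D : set (R * R)) (f : R * R -> C) : C :=
  Complex (Rintegral leb2 D (fun x => complex.Re (f x)))
          (Rintegral leb2 D (fun x => complex.Im (f x))).

Definition cintegrable (D : set (R * R)) (f : R * R -> C) : Prop :=
  leb2.-integrable D (fun x => (complex.Re (f x))%:E) /\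
  leb2.-integrable D (fun x => (complex.Im (f x))%:E).

Definition cle (p q : R * R) : Prop := p.1 <= q.1 /\ p.2 <= q.2.

(* A coefficient function F : R*R -> C stands for the pulled-back 2-form
   g^* omega (x,y) = F(x,y) dx /\ dy.
   The integral over D_A of  /\_j g^*omega_j(t_{1,j},t_{2,j}),  where
   D_A = { x_1 <= x_2 <= ... <= x_m componentwise, x_j = (t_{1,j},t_{2,j}) in A },
   written as the (Fubini) iterated integral over x_1, then x_2 >= x_1, ... *)
Fixpoint itint_from (A : set (R * R)) (Fs : seq (R * R -> C)) (lo : R * R) : C :=
  match Fs with
  | [::] => 1
  | F :: Fs' => cint (A `&` [set x | cle lo x]) (fun x => F x * itint_from A Fs' x)
  end.

Definition itint (A : set (R * R)) (Fs : seq (R * R -> C)) : C :=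
  match Fs with
  | [::] => 1
  | F :: Fs' => cint A (fun x => F x * itint_from A Fs' x)
  end.

(* Non-commutative formal power series in X_1..X_m (indexed by 'I_m):
   a series is its coefficient function on words. *)
Definition ncseries (m : nat) := seq 'I_m -> C.

Definition ncmul (m : nat) (P Q : ncseries m) : ncseries m :=
  fun w => \sum_(j < (size w).+1) P (take j w) * Q (drop j w).

Definition Ja (m : nat) (A : set (R * R)) (Om : 'I_m -> R * R -> C) : ncseries m :=
  fun w => itint A [seq Om i | i <- w].

Definition disc : set (R * R) := [set p | p.1 ^+ 2 + p.2 ^+ 2 <= 1].

(* A is a diangle with vertices p and q: homeomorphic image of the closed disc
   (continuous injective image of a compact set), the two boundary
   half-circles joining (-1,0) and (1,0) becoming the two bounding arcs. *)
Definition diangle (A : set (R * R)) (p q : R * R) : Prop :=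
  exists h : R * R -> R * R,
    {within disc, continuous h} /\
    (forall x y, disc x -> disc y -> h x = h y -> x = y) /\
    h @` disc = A /\ h (-1, 0) = p /\ h (1, 0) = q.

Definition square (a b : R) : set (R * R) :=
  [set x | a <= x.1 <= b /\ a <= x.2 <= b].

End Defs.

(* Main.v *)
From HB Require Import structures.
From mathcomp Require Import all_boot all_order all_algebra.
From mathcomp Require Import all_classical all_reals all_analysis.
From mathcomp Require Import complex.
From mathcomp Require Import lra.
From mathcomp Require Import measurable_realfun.
Require Import Defs.
Set Implicit Arguments. Unset Strict Implicit. Unset Printing Implicit Defensive.
Import Order.TTheory GRing.Theory Num.Theory.
Import numFieldNormedType.Exports.
Local Open Scope classical_set_scope.
Local Open Scope ring_scope.
Section S.
Variable R : realType.
Local Notation T := (measurableTypeR R * measurableTypeR R)%type.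

Lemma open_ball2 (U : set T) x : open U -> U x ->
  exists e : R, 0 < e /\ forall y : T, `|x.1 - y.1| < e -> `|x.2 - y.2| < e -> U y.
Proof.
move=> oU Ux.
have : nbhs x U by apply: open_nbhs_nbhs.
move=> /nbhs_ballP[e e0 H]; exists e; split => // y h1 h2; apply: H.
by split => /=; rewrite -ball_normE.
Qed.

Definition box (q : (rat * rat) * (rat * rat)) : set T :=
  (`]ratr q.1.1, ratr q.1.2[%classic : set (measurableTypeR R))
   `*` (`]ratr q.2.1, ratr q.2.2[%classic : set (measurableTypeR R)).

Lemma box_measurable q : measurable (box q).
Proof. by apply: measurableX; exact: measurable_itv. Qed.

Lemma open_measurableT (U : set T) : open U -> measurable U.
Proof.
move=> oU.
have -> : U = \bigcup_(q : (rat * rat) * (rat * rat))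
   (if `[< box q `<=` U >] then box q else set0).
  apply/seteqP; split => [x Ux|x [q _]]; last first.
    by case: asboolP => // qU /qU.
  have [e [e0 He]] := open_ball2 oU Ux.
  have [a1 a1P] := @rat_in_itvoo R (x.1 - e) x.1 ltac:(by rewrite ltrBlDr ltrDl).
  have [b1 b1P] := @rat_in_itvoo R x.1 (x.1 + e) ltac:(by rewrite ltrDl).
  have [a2 a2P] := @rat_in_itvoo R (x.2 - e) x.2 ltac:(by rewrite ltrBlDr ltrDl).
  have [b2 b2P] := @rat_in_itvoo R x.2 (x.2 + e) ltac:(by rewrite ltrDl).
  move: a1P b1P a2P b2P; rewrite !in_itv /= => /andP[a1l a1r] /andP[b1l b1r]
    /andP[a2l a2r] /andP[b2l b2r].
  exists ((a1, b1), (a2, b2)) => //.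
  case: asboolP => [_|nb]; last first.
    exfalso; apply: nb => -[y1 y2] []; rewrite /= !in_itv /= => /andP[h1 h2] /andP[h3 h4].
    by apply: He => /=; rewrite ltr_norml; apply/andP; split; lra.
  by split; rewrite /= in_itv /=; apply/andP; split.
apply: countable_bigcupT_measurable => // q.
by case: asboolP => _; [exact: box_measurable|exact: measurable0].
Qed.
Lemma cont_sq : continuous (fun p : (R * R)%type => p.1 ^+ 2 + p.2 ^+ 2).
Proof.
move=> x; apply: cvgD; rewrite ?expr2; apply: cvgM; by [apply: cvg_fst|apply: cvg_snd].
Qed.
Lemma disc_compact : compact (@disc R).
Proof.
have cB : compact (`[-1, 1]%classic `*` `[-1, 1]%classic : set (R * R)%type).
  by apply: compact_setX; exact: segment_compact.
apply: (subclosed_compact _ cB).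
- rewrite /disc (_ : mkset _ = (fun p : (R * R)%type => p.1 ^+ 2 + p.2 ^+ 2) @^-1` [set x | x <= 1]) //.
  apply: preimage_closed; last exact: closed_le.
  by move=> x _; apply: cont_sq.
- move=> [x y]; rewrite /disc /= => h; split; rewrite /= in_itv /=; apply/andP; split; nra.
Qed.
Lemma diangle_measurable (A : set (R * R)%type) p q : diangle A p q ->
  measurable (A : set T).
Proof.
move=> [h [ch [_ [hA _]]]].
have cA : compact A by rewrite -hA; apply: continuous_compact => //; exact: disc_compact.
have clA : closed A by apply: compact_closed => //; exact: norm_hausdorff.
rewrite -(setCK A); apply: measurableC; apply: open_measurableT.
exact: closed_openC.
Qed.

Local Notation mu1 := (@lebesgue_measure R).
Local Notation L := (@leb2 R).

Lemma leb2_sigma_finite : sigma_finite setT (mu1 \x mu1)%E.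
Proof.
have /sigma_finiteP[F [TF ndF Foo]] := sigma_finiteT mu1.
exists (fun n => F n `*` F n).
 rewrite -setXTT TF predeqE => -[x y]; split.
    move=> [/= [n _ Fnx] [k _ Gky]]; exists (maxn n k) => //; split.
    - by move: x Fnx; exact/subsetPset/ndF/leq_maxl.
    - by move: y Gky; exact/subsetPset/ndF/leq_maxr.
  by move=> [n _ []/= ? ?]; split; exists n.
move=> k; have [? ?] := Foo k.
split; first exact: measurableX.
by rewrite product_measure1E// lte_mul_pinfty// ge0_fin_numE.
Qed.

Definition leb2sf : {sigma_finite_measure set T -> \bar R} :=
  HB.pack_for (sigma_finite_measure _ R) (mu1 \x mu1)%E
    (Measure_isSigmaFinite.Build _ _ _ (mu1 \x mu1)%E leb2_sigma_finite).

Lemma leb2_set1 (p : T) : L [set p] = 0%E.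
Proof.
have -> : [set p] = [set p.1] `*` [set p.2].
  by apply/seteqP; split => [x /= ->|[x1 x2] /= [-> ->]] //; case: p.
rewrite /leb2 product_measure1E //= lebesgue_measure_set1 mul0e //.
Qed.

Definition geset (lo : T) : set T := [set x | cle lo x].

Lemma geset_measurable lo : measurable (geset lo).
Proof.
have -> : geset lo = `[lo.1, +oo[%classic `*` `[lo.2, +oo[%classic.
  apply/seteqP; split => [[x1 x2] [/= h1 h2]|[x1 x2] [/= h1 h2]];
    by rewrite /= ?in_itv /= ?andbT in h1 h2 *.
by apply: measurableX; exact: measurable_itv.
Qed.

Definition Sle : set (T * T)%type := [set z | cle z.1 z.2].

Lemma Sle_measurable : measurable Sle.
Proof.
have m1 : measurable_fun setT (fun z : (T * T)%type => z.2.1 - z.1.1).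
  apply: measurable_realfun.measurable_funB.
    exact: (measurableT_comp measurable_fst measurable_snd).
  exact: (measurableT_comp measurable_fst measurable_fst).
have m2 : measurable_fun setT (fun z : (T * T)%type => z.2.2 - z.1.2).
  apply: measurable_realfun.measurable_funB.
    exact: (measurableT_comp measurable_snd measurable_snd).
  exact: (measurableT_comp measurable_snd measurable_fst).
have -> : Sle = (setT `&` (fun z : (T * T)%type => z.2.1 - z.1.1) @^-1` `[0, +oo[%classic)
   `&` (setT `&` (fun z : (T * T)%type => z.2.2 - z.1.2) @^-1` `[0, +oo[%classic).
  apply/seteqP; split => z /=; rewrite /Sle /cle /= !in_itv /= !andbT !subr_ge0.
    by move=> [-> ->].
  by move=> [[_ ->] [_ ->]].
apply: measurableI; [apply: m1|apply: m2] => //; exact: measurable_itv.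
Qed.

Lemma max_decomp (x : R) : x = Num.max x 0 - Num.max (- x) 0.
Proof.
case: (boolP (0 <= x)) => x0.
  rewrite (max_idPl x0) (max_idPr _) ?subr0 //; lra.
rewrite -ltNge in x0.
rewrite (max_idPr (ltW x0)) (max_idPl _); first by rewrite sub0r opprK.
lra.
Qed.

Lemma norm_maxp (x : R) : `|Num.max x 0| <= `|x|.
Proof.
case: (boolP (0 <= x)) => x0; first by rewrite (max_idPl x0).
by rewrite -ltNge in x0; rewrite (max_idPr (ltW x0)) normr0.
Qed.

Lemma norm_maxn (x : R) : `|Num.max (- x) 0| <= `|x|.
Proof. by rewrite -(normrN x) norm_maxp. Qed.

Lemma maxp_ge0 (x : R) : 0 <= Num.max x 0.
Proof.
case: (boolP (0 <= x)) => x0; first by rewrite (max_idPl x0).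
by rewrite -ltNge in x0; rewrite (max_idPr (ltW x0)).
Qed.

Lemma fub_meas (k : (T * T)%type -> R) : measurable_fun setT k ->
  (forall x, 0 <= k x) ->
  measurable_fun setT (fun lo : T => Rintegral L setT (fun y => k (lo, y))).
Proof.
move=> mk k0.
have mF := @measurable_fun_fubini_tonelli_F _ _ T T R leb2sf (EFin \o k)
  (proj2 (measurable_EFinP _ _) mk) (fun x => k0 x).
exact: (measurableT_comp (fine_measurable measurableT) mF).
Qed.

Lemma param_meas (X : set T) (g : T -> R) : measurable X ->
  L.-integrable X (EFin \o g) ->
  measurable_fun setT (fun lo : T => Rintegral L (X `&` geset lo) g).
Proof.
move=> mX ig.
have mgX : measurable_fun setT (g \_ X).
  apply/(measurable_restrictT _ mX).
  apply/measurable_EFinP; exact: (measurable_int _ ig).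
have igX : L.-integrable setT (EFin \o (g \_ X)).
  by move/(integrable_mkcond _ mX): ig; apply: eq_integrable => // x _; rewrite /= restrict_EFin.
pose k : (T * T)%type -> R := (fun z => (g \_ X) z.2) \_ Sle.
have mk : measurable_fun setT k.
  apply/(measurable_restrictT _ Sle_measurable).
  exact: (measurable_funS _ _ (measurableT_comp mgX measurable_snd)).
have kle : forall z, `|k z| <= `|(g \_ X) z.2|.
  by move=> z; rewrite /k /patch; case: ifP => _; rewrite ?normr0.
have eqk : forall lo, Rintegral L (X `&` geset lo) g = Rintegral L setT (fun y => k (lo, y)).
  move=> lo; rewrite Rintegral_mkcond; apply: eq_Rintegral => y _.
  rewrite /k /patch /= in_setI.
  have -> : ((lo, y) \in Sle) = (y \in geset lo) by apply/idP/idP => /set_mem h; apply/mem_set.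
  by case: (y \in X); case: (y \in geset lo).
pose kp z := Num.max (k z) 0.
pose kn z := Num.max (- k z) 0.
have mkp : measurable_fun setT kp.
  exact: (measurable_maxr mk (measurable_cst (0 : R))).
have mkn : measurable_fun setT kn.
  exact: (measurable_maxr (measurable_funN mk) (measurable_cst (0 : R))).
have ip : forall lo, L.-integrable setT (EFin \o (fun y => kp (lo, y))).
  move=> lo; apply: (le_integrable measurableT _ _ igX).
    apply/measurable_EFinP; exact: (measurable_fun_pair2 lo mkp).
  move=> y _; rewrite /comp !abse_EFin lee_fin /kp; apply: (le_trans _ (kle (lo, y))).
  exact: norm_maxp.
have in_ : forall lo, L.-integrable setT (EFin \o (fun y => kn (lo, y))).
  move=> lo; apply: (le_integrable measurableT _ _ igX).
    apply/measurable_EFinP; exact: (measurable_fun_pair2 lo mkn).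
  move=> y _; rewrite /comp !abse_EFin lee_fin /kn; apply: (le_trans _ (kle (lo, y))).
  exact: norm_maxn.
have -> : (fun lo => Rintegral L (X `&` geset lo) g) =
  (fun lo => Rintegral L setT (fun y => kp (lo, y)) - Rintegral L setT (fun y => kn (lo, y))).
  apply/funext => lo; rewrite eqk -RintegralB //.
  by apply: eq_Rintegral => y _; rewrite /kp /kn -max_decomp.
apply: measurable_realfun.measurable_funB; apply: fub_meas => //.
- by move=> z; exact: maxp_ge0.
- by move=> z; exact: maxp_ge0.
Qed.

Local Notation C := R[i].

Lemma bounded_of (D : set T) (f : T -> R) M :
  (forall x, `|f x| <= M) -> [bounded f x | x in D].
Proof.
move=> fM; exists M; split; first exact: num_real.
by move=> N MN x _ /=; apply: le_trans (fM x) (ltW MN).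
Qed.

Lemma param_bound (X : set T) (g : T -> R) : measurable X ->
  L.-integrable X (EFin \o g) -> forall lo,
  `|Rintegral L (X `&` geset lo) g| <= Rintegral L X (fun x => `|g x|).
Proof.
move=> mX ig lo.
have mXl : measurable (X `&` geset lo) by apply: measurableI => //; exact: geset_measurable.
apply: le_trans (le_normr_Rintegral mXl _) _.
  by apply: integrableS ig => //; exact: subIsetl.
have iag : L.-integrable X (EFin \o (fun x => `|g x|)).
  by have := integrable_abse ig; apply: eq_integrable => // x _; rewrite /= abse_EFin.
rewrite Rintegral_mkcondr; apply: le_Rintegral => //.
- apply: (le_integrable mX _ _ iag).
    apply/measurable_EFinP; apply/(measurable_restrict _ (geset_measurable lo) mX).
    apply: (measurable_funS mX); first exact: subIsetl.
    by apply/measurable_EFinP; exact: (measurable_int _ iag).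
  move=> x _; rewrite /comp !abse_EFin lee_fin /patch; case: ifP => _ //.
  by rewrite normr0 normr_ge0.
- by move=> x _; rewrite /patch; case: ifP => _ //; rewrite normr_ge0.
Qed.

Lemma ReM (a b : C) : complex.Re (a * b) = complex.Re a * complex.Re b - complex.Im a * complex.Im b.
Proof. by case: a => ? ?; case: b. Qed.
Lemma ImM (a b : C) : complex.Im (a * b) = complex.Re a * complex.Im b + complex.Im a * complex.Re b.
Proof. by case: a => ? ?; case: b. Qed.
Lemma ReD (a b : C) : complex.Re (a + b) = complex.Re a + complex.Re b.
Proof. by case: a => ? ?; case: b. Qed.
Lemma ImD (a b : C) : complex.Im (a + b) = complex.Im a + complex.Im b.
Proof. by case: a => ? ?; case: b. Qed.

Definition good (h : T -> C) := [/\ measurable_fun setT (fun x => complex.Re (h x)),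
  measurable_fun setT (fun x => complex.Im (h x)) &
  exists M, forall x, `|complex.Re (h x)| <= M /\ `|complex.Im (h x)| <= M].

Lemma mul_integrable (X : set T) (F h : T -> C) : measurable X ->
  cintegrable X F -> good h -> cintegrable X (fun x => F x * h x).
Proof.
move=> mX [iR iI] [mR mI [M hM]].
have bR : [bounded complex.Re (h x) | x in X] by apply: (@bounded_of _ _ M) => x; case: (hM x).
have bI : [bounded complex.Im (h x) | x in X] by apply: (@bounded_of _ _ M) => x; case: (hM x).
have mR' := measurable_funS measurableT (subsetT X) mR.
have mI' := measurable_funS measurableT (subsetT X) mI.
split.
- have := integrableB mX (integrableMl mX iR mR' bR) (integrableMl mX iI mI' bI).
  by apply: eq_integrable => // x _; rewrite /= ReM EFinB !EFinM.
- have := integrableD mX (integrableMl mX iR mI' bI) (integrableMl mX iI mR' bR).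
  by apply: eq_integrable => // x _; rewrite /= ImM EFinD !EFinM.
Qed.

Lemma square_measurable (a b : R) : measurable (square a b : set T).
Proof.
have -> : (square a b : set T) = `[a, b]%classic `*` `[a, b]%classic.
  apply/seteqP; split => [[x1 x2] [/= h1 h2]|[x1 x2] [/= h1 h2]];
    by rewrite /= ?in_itv /= in h1 h2 *.
by apply: measurableX; exact: measurable_itv.
Qed.

Local Notation S02 := (square 0 2 : set T).

Lemma cintegrableS (X Y : set T) F : measurable X -> measurable Y -> Y `<=` X ->
  cintegrable X F -> cintegrable Y F.
Proof. by move=> mX mY YX [h1 h2]; split; apply: (integrableS mX mY YX). Qed.

Lemma good_itint_from (X : set T) (Fs : seq (T -> C)) : measurable X ->
  X `<=` S02 -> (forall F, F \in Fs -> cintegrable S02 F) ->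
  good (itint_from X Fs).
Proof.
move=> mX XS; elim: Fs => [|F Fs IH] HF /=.
  split; [exact: measurable_cst|exact: measurable_cst|].
  by exists 1 => x; rewrite /= normr1 normr0 ler01 lexx.
have gh : good (itint_from X Fs) by apply: IH => G GF; apply: HF; rewrite in_cons GF orbT.
have iF : cintegrable X F.
  by apply: (cintegrableS (square_measurable 0 2)) => //; apply: HF; exact: mem_head.
have [iR iI] := mul_integrable mX iF gh.
split.
- exact: (param_meas mX iR).
- exact: (param_meas mX iI).
- exists (Num.max (Rintegral L X (fun x => `|complex.Re (F x * itint_from X Fs x)|))
                  (Rintegral L X (fun x => `|complex.Im (F x * itint_from X Fs x)|))) => lo.
  split; rewrite /cint /=.
  + by apply: le_trans (param_bound mX iR lo) _; rewrite le_max lexx.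
  + by apply: le_trans (param_bound mX iI lo) _; rewrite le_max lexx orbT.
Qed.

Lemma cint_ext (D : set T) (f g : T -> C) : (forall x, D x -> f x = g x) ->
  cint D f = cint D g.
Proof.
move=> fg; rewrite /cint; congr Complex; apply: eq_Rintegral => x /set_mem Dx;
  by rewrite fg.
Qed.

Lemma cintD (D : set T) (f g : T -> C) : measurable D ->
  cintegrable D f -> cintegrable D g ->
  cint D (fun x => f x + g x) = cint D f + cint D g.
Proof.
move=> mD [f1 f2] [g1 g2]; rewrite /cint /=; congr Complex.
- by rewrite -RintegralD //; apply: eq_Rintegral => x _; rewrite ReD.
- by rewrite -RintegralD //; apply: eq_Rintegral => x _; rewrite ImD.
Qed.

Lemma cintMr (D : set T) (f : T -> C) (c : C) : measurable D ->
  cintegrable D f -> cint D (fun x => f x * c) = cint D f * c.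
Proof.
move=> mD [f1 f2]; rewrite /cint; case: c => a b /=.
have iM : forall (g : T -> R) (r : R), L.-integrable D (EFin \o g) ->
    L.-integrable D (EFin \o (fun x => g x * r)).
  move=> g r ig; have := integrableMl mD ig (measurable_cst r) (@bounded_of _ _ `|r| (fun _ => lexx _)).
  by apply: eq_integrable => // x _; rewrite /= EFinM.
congr Complex.
- rewrite -RintegralZr // -RintegralZr // -RintegralB //; try exact: iM.
  by apply: eq_Rintegral => x _; rewrite ReM.
- rewrite -RintegralZr // -RintegralZr // -RintegralD //; try exact: iM.
  by apply: eq_Rintegral => x _; rewrite ImM.
Qed.

Lemma cintegrableD (D : set T) (f g : T -> C) : measurable D ->
  cintegrable D f -> cintegrable D g -> cintegrable D (fun x => f x + g x).
Proof.
move=> mD [f1 f2] [g1 g2]; split.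
- by have := integrableD mD f1 g1; apply: eq_integrable => // x _; rewrite /= ReD EFinD.
- by have := integrableD mD f2 g2; apply: eq_integrable => // x _; rewrite /= ImD EFinD.
Qed.

Lemma cintegrable0 (D : set T) : measurable D -> cintegrable D (fun _ => 0).
Proof. by move=> mD; split; apply: integrable0. Qed.

Lemma cintegrable_sum (D : set T) n (f : 'I_n -> T -> C) : measurable D ->
  (forall j, cintegrable D (f j)) -> cintegrable D (fun x => \sum_(j < n) f j x).
Proof.
move=> mD; elim: n f => [|n IH] f hf.
  by under [X in cintegrable _ X]funext => x do rewrite big_ord0; exact: cintegrable0.
under [X in cintegrable _ X]funext => x do rewrite big_ord_recr /=.
apply: cintegrableD => //; try exact: hf.
exact: (IH (fun j => f (widen_ord (leqnSn n) j))).
Qed.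

Lemma cint0 (D : set T) : measurable D -> cint D (fun _ => 0) = 0.
Proof. by move=> mD; rewrite /cint /= Rintegral_cst // mul0r. Qed.

Lemma cint_sum (D : set T) n (f : 'I_n -> T -> C) : measurable D ->
  (forall j, cintegrable D (f j)) ->
  cint D (fun x => \sum_(j < n) f j x) = \sum_(j < n) cint D (f j).
Proof.
move=> mD; elim: n f => [|n IH] f hf.
  rewrite big_ord0.
  by under [X in cint _ X]funext => x do rewrite big_ord0; exact: cint0.
under [X in cint _ X]funext => x do rewrite big_ord_recr /=.
rewrite cintD //; try exact: hf.
- by rewrite big_ord_recr /= (IH (fun j => f (widen_ord (leqnSn n) j))).
- by apply: cintegrable_sum => // j; exact: hf.
Qed.

Lemma cint_setU (D1 D2 : set T) (f : T -> C) : measurable D1 -> measurable D2 ->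
  D1 `&` D2 = set0 -> cintegrable (D1 `|` D2) f ->
  cint (D1 `|` D2) f = cint D1 f + cint D2 f.
Proof.
move=> m1 m2 d12 [f1 f2]; rewrite /cint /=.
have dj : [disjoint D1 & D2] by apply/disj_setPS; rewrite d12.
by congr Complex; rewrite Rintegral_setU.
Qed.

Lemma set1T_measurable (p : T) : measurable [set p].
Proof.
have -> : [set p] = [set p.1] `*` [set p.2].
  by apply/seteqP; split => [x /= ->|[x1 x2] /= [-> ->]] //; case: p.
by apply: measurableX; exact: measurable_set1.
Qed.

Lemma cint_setD1 (D : set T) (p : T) (f : T -> C) : measurable D ->
  cintegrable D f -> cint (D `\ p) f = cint D f.
Proof.
move=> mD [f1 f2]; rewrite /cint; congr Complex; rewrite /Rintegral.
- by rewrite [in RHS](negligible_integral (set1T_measurable p) mD f1 (leb2_set1 p)).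
- by rewrite [in RHS](negligible_integral (set1T_measurable p) mD f2 (leb2_set1 p)).
Qed.

Lemma cintegrableMr (D : set T) (f : T -> C) (c : C) : measurable D ->
  cintegrable D f -> cintegrable D (fun x => f x * c).
Proof.
move=> mD iF; apply: mul_integrable => //; split; [exact: measurable_cst|exact: measurable_cst|].
by exists (Num.max `|complex.Re c| `|complex.Im c|) => _; rewrite le_max lexx /= le_max lexx orbT.
Qed.

Local Notation p11 := ((1, 1) : T).

Section Main.
Variables (A B : set T).
Hypotheses (mA : measurable A) (mB : measurable B).
Hypotheses (AS : A `<=` (square 0 1 : set T)) (BS : B `<=` (square 1 2 : set T)).
Hypothesis (pA : A p11).

Lemma AS02 : A `<=` S02.
Proof. move=> x Ax; case: (AS Ax) => /andP[a1 a2] /andP[a3 a4]; rewrite /square /=; split; apply/andP; split; lra. Qed.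
Lemma BS02 : B `<=` S02.
Proof. move=> x Bx; case: (BS Bx) => /andP[a1 a2] /andP[a3 a4]; rewrite /square /=; split; apply/andP; split; lra. Qed.

Lemma memAB_p (y : T) : A y -> B y -> y = p11.
Proof.
case: y => y1 y2 /AS; case=> /andP[a1 a2] /andP[a3 a4] /BS; case=> /andP[b1 b2] /andP[b3 b4] /=.
by rewrite /= in a1 a2 a3 a4 b1 b2 b3 b4; congr pair; apply/eqP; rewrite eq_le; apply/andP.
Qed.

Lemma cle_trans (x y z : T) : cle x y -> cle y z -> cle x z.
Proof. by move=> [h1 h2] [h3 h4]; split; [apply: le_trans h3|apply: le_trans h4]. Qed.

Lemma cle_antisym (x y : T) : cle x y -> cle y x -> x = y.
Proof.
case: x => x1 x2; case: y => y1 y2 [/= h1 h2] [/= h3 h4].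
by congr pair; apply/eqP; rewrite eq_le ?h1 ?h2 ?h3 ?h4.
Qed.

Lemma B_cle (y : T) : B y -> cle p11 y.
Proof. by move=> /BS; case=> /andP[a1 a2] /andP[a3 a4]. Qed.

Lemma A_cle (y : T) : A y -> cle y p11.
Proof. by move=> /AS; case=> /andP[a1 a2] /andP[a3 a4]. Qed.

Lemma B_lemma (Fs : seq (T -> C)) : (forall F, F \in Fs -> cintegrable S02 F) ->
  forall x, cle p11 x -> x <> p11 -> itint_from (A `|` B) Fs x = itint_from B Fs x.
Proof.
elim: Fs => [//|F Fs IH] HF x px xp /=.
have -> : (A `|` B) `&` [set y | cle x y] = B `&` [set y | cle x y].
  apply/seteqP; split => [y [[Ay|By] xy]|y [By xy]]; last by split => //; right.
    exfalso; apply: xp; apply: cle_antisym px.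
    exact: cle_trans xy (A_cle Ay).
  by split.
apply: cint_ext => y [By xy]; congr (_ * _); apply: IH.
- by move=> G GF; apply: HF; rewrite in_cons GF orbT.
- exact: cle_trans px xy.
- by move=> yp; apply: xp; apply: cle_antisym px; rewrite -yp.
Qed.


Lemma main_lemma (Fs : seq (T -> C)) : (forall F, F \in Fs -> cintegrable S02 F) ->
  forall lo, cle lo p11 ->
  itint_from (A `|` B) Fs lo =
  \sum_(j < (size Fs).+1) itint_from A (take j Fs) lo * itint B (drop j Fs).
Proof.
elim: Fs => [|F Fs IH] HF lo lop.
  by rewrite big_ord1 /= mulr1.
have HFs : forall G, G \in Fs -> cintegrable S02 G.
  by move=> G GF; apply: HF; rewrite in_cons GF orbT.
have iF : cintegrable S02 F by apply: HF; exact: mem_head.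
have mS := square_measurable 0 2.
have mlo := geset_measurable lo.
have mAl : measurable (A `&` geset lo) by exact: measurableI.
have mBp : measurable (B `\ p11) by apply: measurableD => //; exact: set1T_measurable.
have mAB : measurable (A `|` B) by exact: measurableU.
have ABS : A `|` B `<=` S02 by move=> y [/AS02|/BS02].
have gI := good_itint_from mAB ABS HFs.
have gB := good_itint_from mB BS02 HFs.
have gA : forall j, good (itint_from A (take j Fs)).
  by move=> j; apply: good_itint_from; [exact: mA|exact: AS02|move=> G /mem_take; exact: HFs].
rewrite /=.
have -> : (A `|` B) `&` [set x | cle lo x] = (A `&` geset lo) `|` (B `\ p11).
  apply/seteqP; split => [y [[Ay|By] ly]|y [[Ay ly]|[By yp]]].
  - by left.
  - have [->|yp] := pselect (y = p11); first by left.
    by right; split => //; exact/eqP.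
  - by split => //; left.
  - split; first by right.
    exact: cle_trans lop (B_cle By).
rewrite cint_setU //; last 2 first.
- apply/seteqP; split => // y [[Ay _] [By yp]]; apply: yp; exact: memAB_p.
- apply: mul_integrable => //; first exact: measurableU.
  apply: (cintegrableS mS); [exact: measurableU| |exact: iF].
  by move=> y [[/AS02 ?]|[/BS02 ?]].
rewrite big_ord_recl /= mul1r addrC; congr (_ + _).
  rewrite (@cint_ext _ _ (fun x => F x * itint_from B Fs x)); last first.
    move=> y [By yp]; congr (_ * _); apply: B_lemma => //; exact: B_cle.
  rewrite cint_setD1 //; apply: mul_integrable => //.
  exact: (cintegrableS mS mB BS02 iF).
rewrite (@cint_ext _ _ (fun x => \sum_(j < (size Fs).+1)
    (F x * itint_from A (take j Fs) x) * itint B (drop j Fs))); last first.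
  move=> y [Ay ly]; rewrite IH //; last exact: A_cle.
  by rewrite mulr_sumr; apply: eq_bigr => j _; rewrite mulrA.
have iFA : forall j, cintegrable (A `&` geset lo) (fun x => F x * itint_from A (take j Fs) x).
  by move=> j; apply: mul_integrable => //; apply: (cintegrableS mS) => // y [/AS02].
rewrite cint_sum //; last by move=> j; apply: cintegrableMr.
apply: eq_bigr => j _; rewrite cintMr //.
Qed.

End Main.

Lemma itint_from_eq (X : set T) (Fs : seq (T -> C)) lo : X `<=` geset lo ->
  itint X Fs = itint_from X Fs lo.
Proof. by move=> Xl; case: Fs => //= F Fs; rewrite setIidl. Qed.

End S.

Unset Implicit Arguments.
Set Strict Implicit.
Set Printing Implicit Defensive.

Theorem mainTheorem3 (R : realType)
  (A B : set (R * R))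
  (hA : diangle A (0, 0) (1, 1)) (hAsub : A `<=` square 0 1)
  (hB : diangle B (1, 1) (2, 2)) (hBsub : B `<=` square 1 2) :
  (* (i) *)
  (forall ws : seq (R * R -> R[i]),
     (forall F, F \in ws -> cintegrable (square 0 2) F) ->
     itint (A `|` B) ws =
       \sum_(j < (size ws).+1) itint A (take j ws) * itint B (drop j ws))
  /\
  (* (ii) *)
  (forall (m : nat) (Om : 'I_m -> R * R -> R[i]),
     (forall i, cintegrable (square 0 2) (Om i)) ->
     Ja (A `|` B) Om = ncmul (Ja A Om) (Ja B Om)).
Proof.
have mA : measurable (A : set (measurableTypeR R * measurableTypeR R)%type).
  exact: diangle_measurable hA.
have mB : measurable (B : set (measurableTypeR R * measurableTypeR R)%type).
  exact: diangle_measurable hB.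
have pA : A (1, 1).
  case: hA => h [_ [_ [hAe [_ h10]]]]; rewrite -hAe; exists (1, 0) => //.
  by rewrite /disc /= expr1n expr0n /= addr0.
have partI : forall ws : seq (R * R -> R[i]),
     (forall F, F \in ws -> cintegrable (square 0 2) F) ->
     itint (A `|` B) ws =
       \sum_(j < (size ws).+1) itint A (take j ws) * itint B (drop j ws).
  move=> ws HF.
  have ge0 : forall X : set (R * R), X `<=` square 0 2 -> X `<=` geset (0, 0).
    by move=> X XS y /XS [/andP[h1 _] /andP[h2 _]]; split.
  have AS2 : A `<=` square 0 2.
    by move=> y /hAsub [/andP[h1 h2] /andP[h3 h4]]; split; apply/andP; split => //; lra.
  have BS2 : B `<=` square 0 2.
    by move=> y /hBsub [/andP[h1 h2] /andP[h3 h4]]; split; apply/andP; split => //; lra.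
  rewrite (@itint_from_eq R _ _ (0, 0)); last by apply: ge0 => y [/AS2|/BS2].
  rewrite (@main_lemma R A B) //; try by split => /=; lra.
  apply: eq_bigr => j _; congr (_ * _); apply/esym/itint_from_eq.
  exact: ge0.
split => // m Om HO; apply/funext => w; rewrite /Ja /ncmul.
rewrite partI; last by move=> F /mapP [i _ ->]; exact: HO.
rewrite size_map; apply: eq_bigr => j _.
by rewrite map_take map_drop.
Qed.
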